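(* Write $\cdot|_0$ for substitution $f_1'=0$. For every polynomial $\mathcal P$ in ten variables there exist polynomials $\mathcal P_0,\mathcal Q_0,\mathcal R_0,\mathcal S_0,\mathcal T_0,\mathcal U_0,\mathcal V_0$ in four variables such that, identically in the jet variables, $$\mathcal P(\Lambda^3|_0,\Lambda^5_1|_0,\Lambda^7_{1,1}|_0,M^8|_0,\Lambda^9_{1,1,1}|_0,M^{10}_1|_0,N^{12}|_0,K^{12}_{1,1}|_0,H^{14}_1|_0,F^{16}_{1,1}|_0)$$ $$=\mathcal P_0(\Lambda^3,\Lambda^5_1,M^8,N^{12})|_0+\Lambda^7_{1,1}\mathcal Q_0(\Lambda^5_1,\Lambda^7_{1,1},M^8,N^{12})|_0+\Lambda^9_{1,1,1}\mathcal R_0(\Lambda^7_{1,1},M^8,\Lambda^9_{1,1,1},N^{12})|_0+M^{10}_1\mathcal S_0(M^8,\Lambda^9_{1,1,1},M^{10}_1,N^{12})|_0$$ $$+K^{12}_{1,1}\mathcal T_0(\Lambda^9_{1,1,1},M^{10}_1,N^{12},K^{12}_{1,1})|_0+H^{14}_1\mathcal U_0(\Lambda^9_{1,1,1},N^{12},K^{12}_{1,1},H^{14}_1)|_0+F^{16}_{1,1}\mathcal V_0(\Lambda^9_{1,1,1},K^{12}_{1,1},H^{14}_1,F^{16}_{1,1})|_0 .$$ Moreover this representation is unique: if the right-hand side vanishes identically in $\mathbb C[f_2',f_1'',f_2'',\dots,f_1^{(5)},f_2^{(5)}]$, then $\mathcal P_0,\mathcal Q_0,\mathcal R_0,\mathcal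 S_0,\mathcal T_0,\mathcal U_0,\mathcal V_0$ are all identically zero.
   Context: $f_i^{(\lambda)}$ ($i\in\{1,2\}$, $\lambda\ge1$) are independent indeterminates; $D=\sum_{i,\lambda}f_i^{(\lambda+1)}\partial/\partial f_i^{(\lambda)}$; $\Delta^{\alpha,\beta}:=f_1^{(\alpha)}f_2^{(\beta)}-f_1^{(\beta)}f_2^{(\alpha)}$; for $P,Q$ of weights $m,n$, $[P,Q]:=n\,DP\cdot Q-m\,P\cdot DQ$ (superscripts below are weights, $f_1'$ has weight 1). $\Lambda^3:=\Delta^{1,2}$; $\Lambda^5_1:=\Delta^{1,3}f_1'-3\Delta^{1,2}f_1''$; $\Lambda^7_{1,1}:=(\Delta^{1,4}+4\Delta^{2,3})(f_1')^2-10\Delta^{1,3}f_1'f_1''+15\Delta^{1,2}(f_1'')^2$; $M^8:=3\Delta^{1,4}\Delta^{1,2}+12\Delta^{2,3}\Delta^{1,2}-5(\Delta^{1,3})^2$; $\Lambda^9_{1,1,1}:=[\Lambda^7_{1,1},f_1']$; $M^{10}_1:=[M^8,f_1']$; $N^{12}:=[M^8,\Lambda^3]$; $K^{12}_{1,1}:=[\Lambda^7_{1,1},\Lambda^5_1]/f_1'$ (this bracket is divisible by $f_1'$); $H^{14}_1:=[M^8,\Lambda^5_1]$; $F^{16}_{1,1}:=[M^8,\Lambda^7_{1,1}]$. *)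

(* Defs.v *)
From HB Require Import structures.
From mathcomp Require Import all_boot all_order all_algebra.
Set Implicit Arguments. Unset Strict Implicit. Unset Printing Implicit Defensive.
Import GRing.Theory Num.Theory.
Local Open Scope ring_scope.

(* Polynomials with coefficients in R in variables of type V, represented
   as polynomial expressions; [teval rho t] evaluates t at rho : V -> R. *)
Inductive term (R V : Type) : Type :=
| tC of R
| tV of V
| tAdd of term R V & term R V
| tMul of term R V & term R V
| tOpp of term R V.

Arguments tC {R V}. Arguments tV {R V}.

Fixpoint teval (R : nzRingType) (V : Type) (rho : V -> R) (t : term R V) : R :=
  match t with
  | tC c => c
  | tV v => rho v
  | tAdd a b => teval rho a + teval rho b
  | tMul a b => teval rho a * teval rho b
  | tOpp a => - teval rho a
  end.

Section Jets.
Variable R : nzRingType.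

(* jet variable (i, k) stands for f_{i+1}^{(k)}, i : 'I_2, k >= 1 *)
Definition jvar := ('I_2 * nat)%type.
Definition jpoly := term R jvar.

Definition tsub (a b : jpoly) : jpoly := tAdd a (tOpp b).
Definition tnat (n : nat) : jpoly := tC (n%:R).
Definition tsq (a : jpoly) : jpoly := tMul a a.

Definition f1 (k : nat) : jpoly := tV (ord0, k).
Definition f2 (k : nat) : jpoly := tV (ord_max, k).

Definition v1 : jvar := (ord0, 1%N).

(* the total derivation D = sum f_i^(l+1) d/d f_i^(l) *)
Fixpoint tD (t : jpoly) : jpoly :=
  match t with
  | tC _ => tC 0
  | tV (i, k) => tV (i, k.+1)
  | tAdd a b => tAdd (tD a) (tD b)
  | tMul a b => tAdd (tMul (tD a) b) (tMul a (tD b))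
  | tOpp a => tOpp (tD a)
  end.

Fixpoint tset0 (t : jpoly) : jpoly :=
  match t with
  | tC c => tC c
  | tV v => if v == v1 then tC 0 else tV v
  | tAdd a b => tAdd (tset0 a) (tset0 b)
  | tMul a b => tMul (tset0 a) (tset0 b)
  | tOpp a => tOpp (tset0 a)
  end.

(* quotient by f_1': t = t|_{f_1'=0} + f_1' * tdiv1 t  (lemma tdiv1P below);
   hence when t is divisible by f_1', tdiv1 t is the quotient t / f_1'. *)
Fixpoint tdiv1 (t : jpoly) : jpoly :=
  match t with
  | tC _ => tC 0
  | tV v => if v == v1 then tC 1 else tC 0
  | tAdd a b => tAdd (tdiv1 a) (tdiv1 b)
  | tMul a b => tAdd (tMul (tdiv1 a) b) (tMul (tset0 a) (tdiv1 b))
  | tOpp a => tOpp (tdiv1 a)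
  end.

Definition jset0 (x : jvar -> R) : jvar -> R :=
  fun v => if v == v1 then 0 else x v.

Definition Delta (a b : nat) : jpoly :=
  tsub (tMul (f1 a) (f2 b)) (tMul (f1 b) (f2 a)).

(* [P,Q] for P, Q of weights m, n *)
Definition brk (m n : nat) (P Q : jpoly) : jpoly :=
  tsub (tMul (tMul (tnat n) (tD P)) Q) (tMul (tMul (tnat m) P) (tD Q)).

Definition Lam3 : jpoly := Delta 1 2.
Definition Lam5 : jpoly :=
  tsub (tMul (Delta 1 3) (f1 1)) (tMul (tnat 3) (tMul (Delta 1 2) (f1 2))).
Definition Lam7 : jpoly :=
  tAdd (tsub (tMul (tAdd (Delta 1 4) (tMul (tnat 4) (Delta 2 3))) (tsq (f1 1)))
             (tMul (tnat 10) (tMul (Delta 1 3) (tMul (f1 1) (f1 2)))))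
       (tMul (tnat 15) (tMul (Delta 1 2) (tsq (f1 2)))).
Definition M8 : jpoly :=
  tsub (tAdd (tMul (tnat 3) (tMul (Delta 1 4) (Delta 1 2)))
             (tMul (tnat 12) (tMul (Delta 2 3) (Delta 1 2))))
       (tMul (tnat 5) (tsq (Delta 1 3))).
Definition Lam9 : jpoly := brk 7 1 Lam7 (f1 1).
Definition M10 : jpoly := brk 8 1 M8 (f1 1).
Definition N12 : jpoly := brk 8 3 M8 Lam3.
Definition K12 : jpoly := tdiv1 (brk 7 5 Lam7 Lam5).
Definition H14 : jpoly := brk 8 5 M8 Lam5.
Definition F16 : jpoly := brk 8 7 M8 Lam7.

Definition ev0 (x : jvar -> R) (t : jpoly) : R := teval (jset0 x) t.

Definition comp0 (n : nat) (Q : term R 'I_n) (L : seq jpoly) (x : jvar -> R) : R :=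
  teval (fun j : 'I_n => ev0 x (nth (tC 0) L j)) Q.

Lemma jset0_v1 (x : jvar -> R) : jset0 x v1 = 0.
Proof. by rewrite /jset0 eqxx. Qed.

Lemma tset0P (x : jvar -> R) (t : jpoly) : teval x (tset0 t) = teval (jset0 x) t.
Proof.
elim: t => [c|v|a IHa b IHb|a IHa b IHb|a IHa] //=; try by rewrite IHa ?IHb.
by rewrite /jset0; case: (v == v1).
Qed.

End Jets.

Lemma tdiv1P (R : comNzRingType) (x : jvar -> R) (t : jpoly R) :
  teval x t = teval (jset0 x) t + x v1 * teval x (tdiv1 t).
Proof.
elim: t => [c|v|a IHa b IHb|a IHa b IHb|a IHa] /=.
- by rewrite mulr0 addr0.
- rewrite /jset0; case: eqP => [->|_]; first by rewrite mulr1 add0r.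
  by rewrite mulr0 addr0.
- by rewrite IHa IHb mulrDr addrACA.
- rewrite tset0P {1}IHa mulrDl {1}IHb mulrDr mulrDr -addrA.
  congr (_ + _); rewrite addrC; congr (_ + _); rewrite !mulrA //.
  by rewrite [_ * x v1]mulrC.
- by rewrite IHa opprD mulrN.
Qed.

Arguments Lam3 {R}. Arguments Lam5 {R}. Arguments Lam7 {R}. Arguments M8 {R}.
Arguments Lam9 {R}. Arguments M10 {R}. Arguments N12 {R}. Arguments K12 {R}.
Arguments H14 {R}. Arguments F16 {R}.

(* Main.v *)
Require Import Defs.
From HB Require Import structures.
From mathcomp Require Import all_boot all_order all_algebra.
From Stdlib Require Import Ring Lia.
Import GRing.Theory Num.Theory.
Local Open Scope ring_scope.

Fixpoint mon {R : nzRingType} (rho : nat -> R) (e : seq nat) : R :=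
  match e with
  | [::] => 1
  | k :: e' => rho 0%N ^+ k * mon (fun i => rho i.+1) e'
  end.

Fixpoint eadd (a b : seq nat) : seq nat :=
  match a, b with
  | x :: a', y :: b' => (x + y)%N :: eadd a' b'
  | [::], _ => b
  | _, [::] => a
  end.
Definition escale (k : nat) (a : seq nat) := map (muln k) a.
Fixpoint elin (as_ : seq (seq nat)) (e : seq nat) : seq nat :=
  match e with
  | [::] => nseq 4 0%N
  | k :: e' => eadd (escale k (head [::] as_)) (elin (behead as_) e')
  end.
Fixpoint uvec (i d : nat) : seq nat :=
  match d with
  | 0 => [::]
  | d'.+1 => match i with 0 => 1%N :: nseq d' 0%N | i'.+1 => 0%N :: uvec i' d' end
  end.

Lemma nth_eadd a b i : nth 0%N (eadd a b) i = (nth 0%N a i + nth 0%N b i)%N.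
Proof. by elim: a b i => [|x a IH] [|y b] [|i] //=; rewrite ?addn0. Qed.
Lemma size_eadd a b : size (eadd a b) = maxn (size a) (size b).
Proof. by elim: a b => [|x a IH] [|y b] //=; rewrite ?maxn0 // IH maxnSS. Qed.
Lemma size_uvec i d : size (uvec i d) = d.
Proof. by elim: d i => [|d IH] [|i] //=; rewrite ?size_nseq ?IH. Qed.

Section Rep.
Variable R : comNzRingType.
Implicit Types (rho : nat -> R).

Lemma mon_ext rho rho' e : (forall i, (i < size e)%N -> rho i = rho' i) -> mon rho e = mon rho' e.
Proof.
elim: e rho rho' => [|k e IH] rho rho' H //=.
by rewrite (H 0%N) // (IH _ (fun i => rho' i.+1)) // => i Hi; apply: H.
Qed.

Lemma mon_eadd rho a b : mon rho (eadd a b) = mon rho a * mon rho b.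
Proof.
elim: a b rho => [|x a IH] [|y b] rho /=; rewrite ?mul1r ?mulr1 //.
by rewrite IH exprD mulrACA.
Qed.

Lemma mon_escale rho k a : mon rho (escale k a) = mon rho a ^+ k.
Proof.
elim: a rho => [|x a IH] rho /=; first by rewrite expr1n.
by rewrite IH exprMn mulnC exprM.
Qed.

Lemma mon_nseq0 rho d : mon rho (nseq d 0%N) = 1.
Proof. by elim: d rho => [|d IH] rho //=; rewrite IH expr0 mulr1. Qed.

Lemma mon_uvec rho i d : (i < d)%N -> mon rho (uvec i d) = rho i.
Proof.
elim: d i rho => [|d IH] [|i] rho //= Hi.
  by rewrite mon_nseq0 expr1 mulr1.
by rewrite IH // expr0 mul1r.
Qed.

Lemma mon_elin rho (ks : seq R) as_ (V : nat -> R) e :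
  (forall i, rho i = nth 0 ks i * mon V (nth [::] as_ i)) ->
  mon rho e = mon (fun i => nth 0 ks i) e * mon V (elin as_ e).
Proof.
elim: e rho ks as_ => [|k e IH] rho ks as_ H /=.
  by move: (mon_nseq0 V 4) => /= ->; rewrite mulr1.
rewrite (IH _ (behead ks) (behead as_)); last by move=> i; rewrite H !nth_behead.
rewrite H mon_eadd mon_escale exprMn.
rewrite (@mon_ext (fun i => nth 0 (behead ks) i) (fun i => nth 0 ks i.+1)); last by move=> i _; rewrite nth_behead.
by rewrite !nth0 mulrACA.
Qed.

Definition rep := seq (R * seq nat).
Definition reval rho (L : rep) := \sum_(t <- L) t.1 * mon rho t.2.

Fixpoint trep {d : nat} (t : term R 'I_d) : rep :=
  match t with
  | tC c => [:: (c, nseq d 0%N)]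
  | tV i => [:: (1, uvec i d)]
  | tAdd a b => trep a ++ trep b
  | tMul a b => [seq (s.1 * u.1, eadd s.2 u.2) | s <- trep a, u <- trep b]
  | tOpp a => [seq (- s.1, s.2) | s <- trep a]
  end.

Definition rn {d} (rho : 'I_d -> R) : nat -> R :=
  fun i => if insub i is Some j then rho j else 0.

Lemma rnE d (rho : 'I_d -> R) (i : 'I_d) : rn rho i = rho i.
Proof. by rewrite /rn valK. Qed.

Lemma reval_cat rho L1 L2 : reval rho (L1 ++ L2) = reval rho L1 + reval rho L2.
Proof. by rewrite /reval big_cat. Qed.

Lemma trepP d (rho : 'I_d -> R) t : teval rho t = reval (rn rho) (trep t).
Proof.
rewrite /reval; elim: t => [c|i|a IHa b IHb|a IHa b IHb|a IHa] /=.
- by rewrite big_seq1 /= mon_nseq0 mulr1.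
- by rewrite big_seq1 /= mon_uvec // mul1r rnE.
- by rewrite big_cat IHa IHb.
- rewrite IHa IHb big_allpairs_dep mulr_suml; apply: eq_bigr => s _.
  rewrite mulr_sumr; apply: eq_bigr => u _ /=.
  by rewrite mon_eadd mulrACA.
- by rewrite IHa big_map -sumrN; apply: eq_bigr => s _ /=; rewrite mulNr.
Qed.

Lemma trep_size d (t : term R 'I_d) : all (fun s => size s.2 == d) (trep t).
Proof.
elim: t => [c|i|a IHa b IHb|a IHa b IHb|a IHa] /=.
- by rewrite size_nseq eqxx.
- by rewrite size_uvec eqxx.
- by rewrite all_cat IHa IHb.
- apply/allP=> s /allpairsP [[p q] [Hp Hq ->]] /=.
  by rewrite size_eadd (eqP (allP IHa _ Hp)) (eqP (allP IHb _ Hq)) maxnn.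
- by rewrite all_map; apply: sub_all IHa => s.
Qed.

Definition tr (kg : R) (ag : seq nat) (ks : seq R) (as_ : seq (seq nat)) (s : R * seq nat) :=
  (kg * s.1 * mon (fun i => nth 0 ks i) s.2, eadd ag (elin as_ s.2)).

Lemma reval_tr (V : nat -> R) rho kg ag ks as_ L :
  (forall i, rho i = nth 0 ks i * mon V (nth [::] as_ i)) ->
  kg * mon V ag * reval rho L = reval V (map (tr kg ag ks as_) L).
Proof.
move=> H; rewrite /reval big_map mulr_sumr; apply: eq_bigr => s _ /=.
rewrite (mon_elin rho ks as_ V s.2 H) mon_eadd.
by rewrite [s.1 * _]mulrA mulrACA !mulrA.
Qed.

End Rep.
Arguments reval {R}. Arguments trep {R d}. Arguments rn {R d}. Arguments tr {R}.

Section Gens.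
Variable R : comNzRingType.
Definition T : Type := GRing.ComNzRing.sort R.
Definition r0 : T := 0.
Definition r1 : T := 1.
Definition radd (a b : T) : T := a + b.
Definition rmul (a b : T) : T := a * b.
Definition ropp (a : T) : T := - a.
Definition rsub (a b : T) : T := a - b.
Lemma Rth : @ring_theory T r0 r1 radd rmul rsub ropp eq.
Proof. split; rewrite /r0/r1/radd/rmul/rsub/ropp=> *; [exact: add0r|exact: addrC|exact: addrA|exact: mul1r|exact: mulrC|exact: mulrA|exact: mulrDl|done|exact: subrr]. Qed.
Add Ring Rring : Rth.
Fixpoint tev {V} (rho : V -> T) (t : term R V) : T :=
  match t with
  | tC c => c
  | tV v => rho v
  | tAdd a b => radd (tev rho a) (tev rho b)
  | tMul a b => rmul (tev rho a) (tev rho b)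
  | tOpp a => ropp (tev rho a)
  end.
Lemma tevE V (rho : V -> R) t : teval rho t = tev rho t.
Proof. by elim: t => //= [? -> ? ->|? -> ? ->|? ->]. Qed.
Lemma natS n : (n.+1)%:R = radd r1 (n%:R : R).
Proof. by rewrite mulrS. Qed.
Lemma nat0 : (0%:R : R) = r0. Proof. by []. Qed.

Lemma jsE (x : jvar -> R) i k : jset0 x (i,k) = if (i == ord0) && (k == 1)%N then 0 else x (i,k).
Proof. by rewrite /jset0 /v1 xpair_eqE. Qed.

Definition U (x : jvar -> R) : nat -> R :=
  fun i => nth 0 [:: x (ord0,2%N); x (ord_max,1%N); ev0 x M8; ev0 x N12] i.

Ltac gsolve :=
  rewrite /U /= ?exprS ?expr0 /ev0 !tevE /Lam3 /Lam5 /Lam7 /Lam9 /M10 /N12 /K12 /H14 /F16 /brk /M8 /Delta /tsub /tnat /tsq /f1 /f2 /=;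
  rewrite !jsE /=;
  rewrite ?natS ?nat0 -?/r0 -?/r1 -!/(rmul _ _) -?/(radd _ _) -?/(ropp _);
  match goal with |- ?a = ?b => change (@eq T a b) end; ring.

Lemma G3 x : ev0 x Lam3 = - 1 * mon (U x) [:: 1; 1; 0; 0]%N.
Proof. gsolve. Qed.
Lemma G5 x : ev0 x Lam5 = 3%:R * mon (U x) [:: 2; 1; 0; 0]%N.
Proof. gsolve. Qed.
Lemma G7 x : ev0 x Lam7 = - 15%:R * mon (U x) [:: 3; 1; 0; 0]%N.
Proof. gsolve. Qed.
Lemma G8 x : ev0 x M8 = 1 * mon (U x) [:: 0; 0; 1; 0]%N.
Proof. by rewrite /= !expr0 !expr1 !mul1r !mulr1. Qed.
Lemma G9 x : ev0 x Lam9 = 105%:R * mon (U x) [:: 4; 1; 0; 0]%N.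
Proof. gsolve. Qed.
Lemma G10 x : ev0 x M10 = - 8%:R * mon (U x) [:: 1; 0; 1; 0]%N.
Proof. gsolve. Qed.
Lemma G12 x : ev0 x N12 = 1 * mon (U x) [:: 0; 0; 0; 1]%N.
Proof. by rewrite /= !expr0 !expr1 !mul1r !mulr1. Qed.
Lemma G12b x : ev0 x K12 = 5%:R * mon (U x) [:: 2; 0; 1; 0]%N.
Proof. gsolve. Qed.
Lemma G14 x : ev0 x H14 = - 5%:R * mon (U x) [:: 1; 0; 0; 1]%N.
Proof. gsolve. Qed.
Lemma G16 x : ev0 x F16 = 35%:R * mon (U x) [:: 2; 0; 0; 1]%N.
Proof. gsolve. Qed.

Lemma M8spec (x : jvar -> R) : x (ord0,3%N) = 0 -> x (ord_max,2%N) = 0 -> x (ord_max,3%N) = 0 ->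
  ev0 x M8 = (3%:R * x (ord0,2%N) * (x (ord_max,1%N) ^+ 2)) * x (ord0,4%N).
Proof.
move=> H3 H22 H23.
rewrite /= ?exprS ?expr0 /ev0 !tevE /M8 /Delta /tsub /tnat /tsq /f1 /f2 /=.
rewrite !jsE /= H3 H22 H23.
rewrite ?natS ?nat0 -?/r0 -?/r1 -!/(rmul _ _) -?/(radd _ _) -?/(ropp _).
match goal with |- ?a = ?b => change (@eq T a b) end; ring.
Qed.
Lemma N12spec (x : jvar -> R) : x (ord0,3%N) = 0 -> x (ord_max,2%N) = 0 -> x (ord_max,3%N) = 0 ->
  x (ord_max,4%N) = 0 ->
  ev0 x N12 = (- 9%:R * x (ord0,2%N) ^+ 2 * (x (ord_max,1%N) ^+ 3)) * x (ord0,5%N).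
Proof.
move=> H3 H22 H23 H24.
rewrite /= ?exprS ?expr0 /ev0 !tevE /N12 /brk /Lam3 /M8 /Delta /tsub /tnat /tsq /f1 /f2 /=.
rewrite !jsE /= H3 H22 H23 H24.
rewrite ?natS ?nat0 -?/r0 -?/r1 -!/(rmul _ _) -?/(radd _ _) -?/(ropp _).
match goal with |- ?a = ?b => change (@eq T a b) end; ring.
Qed.
Lemma rearr (a b X k c : R) : a * b * (X * (k * c)) = X * (a * k) * (b * c).
Proof.
rewrite -!/(rmul _ _).
match goal with |- ?a = ?b => change (@eq T a b) end; ring.
Qed.
End Gens.

Arguments U {R}.
Section Group.
Variable R : comNzRingType.

Lemma group_zero (L : rep R) : (forall e, \sum_(t <- L | t.2 == e) t.1 = 0) ->
  forall rho, reval rho L = 0.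
Proof.
move=> H rho; move: {2}(size L) (leqnn (size L)) => n.
elim: n L H => [|n IH] [|t0 L'] H Hs //; rewrite /reval ?big_nil //.
rewrite (bigID (fun t => t.2 == t0.2)) /=.
have -> : \sum_(i <- t0 :: L' | i.2 == t0.2) i.1 * mon rho i.2 =
          (\sum_(i <- t0 :: L' | i.2 == t0.2) i.1) * mon rho t0.2.
  by rewrite mulr_suml; apply: eq_bigr => t /eqP ->.
rewrite H mul0r add0r -big_filter /= eqxx /=.
apply: IH; last by rewrite size_filter (leq_trans (count_size _ _)).
move=> e; rewrite big_filter_cond.
case: (eqVneq e t0.2) => [->|He].
  by rewrite big_pred0 // => t; case: eqP.
apply: (etrans _ (H e)); have He' : t0.2 != e by rewrite eq_sym.
rewrite big_cons (negbTE He').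
apply: eq_bigl => t /=; case: (eqVneq t.2 e) => [->|_]; rewrite ?andbF ?andbT //.
Qed.
End Group.

Section Extract.
Variable R : numDomainType.

Lemma poly_nz_roots (p : {poly R}) : (forall r, r != 0 -> p.[r] = 0) -> p = 0.
Proof.
move=> H; apply/eqP; apply/negPn/negP => Hp.
set rs := [seq (i.+1)%:R | i <- iota 0 (size p)] : seq R.
have H1 : all (root p) rs.
  by apply/allP => r /mapP [i _ ->]; rewrite rootE H // pnatr_eq0.
have H2 : uniq rs.
  by rewrite map_inj_uniq ?iota_uniq // => a b /eqP; rewrite eqr_nat => /eqP [].
by have := max_poly_roots Hp H1 H2; rewrite size_map size_iota ltnn.
Qed.

Lemma extract (d : nat) (L : rep R) :
  all (fun s => size s.2 == d) L ->
  (forall rho, (forall i, (i < d)%N -> rho i != 0) -> reval rho L = 0) ->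
  forall e, \sum_(t <- L | t.2 == e) t.1 = 0.
Proof.
elim: d L => [|d IH] L Hsz H e.
  have HL : forall t, t \in L -> t.2 = [::].
    by move=> t /(allP Hsz) /eqP /size0nil.
  case: (eqVneq e [::]) => [->|He].
    have := H (fun _ => 1) (fun _ _ => oner_neq0 R).
    move=> H0; rewrite -[RHS]H0 /reval big_seq_cond [in RHS]big_seq_cond.
    apply: eq_big => [t|t /andP [Ht _]]; first by case: (boolP (t \in L)) => //= /HL ->; rewrite eqxx.
    by rewrite (HL _ Ht) /= mulr1.
  rewrite big_seq_cond big1 // => t /andP [/HL -> /eqP E].
  by move: He; rewrite -E eqxx.
case: (boolP (size e == d.+1)) => Hse; last first.
  rewrite big_seq_cond big1 // => t /andP [/(allP Hsz) /eqP Ht /eqP E].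
  by move: Hse; rewrite -E Ht eqxx.
case: e Hse => [|k e'] //= /eqP [Hse].
set Lk := [seq (t.1, behead t.2) | t <- L & head 0%N t.2 == k].
have HLk : all (fun s => size s.2 == d) Lk.
  apply/allP => s /mapP [t]; rewrite mem_filter => /andP [_ /(allP Hsz) /eqP Ht] -> /=.
  by rewrite size_behead Ht.
have HB : forall rho', (forall i, (i < d)%N -> rho' i != 0) -> reval rho' Lk = 0.
  move=> rho' Hrho'.
  pose p := \sum_(t <- L) (t.1 * mon rho' (behead t.2)) *: 'X^(head 0%N t.2).
  have Hp : p = 0.
    apply: poly_nz_roots => r Hr.
    rewrite horner_sum.
    have := H (fun i => if i is i'.+1 then rho' i' else r).
    move=> H'; rewrite -[RHS]H'; last by case=> [|i] //= /Hrho'.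
    rewrite /reval big_seq [RHS]big_seq; apply: eq_bigr => t /(allP Hsz) /eqP.
    case: t.2 => [|h tl] //= _.
    by rewrite hornerZ hornerXn -mulrA (mulrC (mon _ _)).
  have := congr1 (fun q : {poly R} => q`_k) Hp.
  rewrite coef0 coef_sum => E; apply: (etrans _ E).
  rewrite /reval big_map big_filter big_mkcond; apply: eq_bigr => t _ /=.
  by rewrite coefZ coefXn eq_sym; case: eqP; rewrite ?mulr1 ?mulr0.
have E := IH Lk HLk HB e'; apply: (etrans _ E).
rewrite big_map big_filter_cond /=.
rewrite big_seq_cond [RHS]big_seq_cond; apply: eq_bigl => t.
case: (boolP (t \in L)) => //= /(allP Hsz) /eqP.
by case: t.2 => [|h tl] //= _; rewrite eqseq_cons.
Qed.
End Extract.

Ltac nlia := repeat match goal with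
  | H : is_true (_ <= _)%N |- _ => move/leP in H
  | H : is_true (_ < _)%N |- _ => move/ltP in H
  | H : is_true (~~ (_ <= _)%N) |- _ => rewrite -ltnNge in H
  | H : is_true (~~ (_ < _)%N) |- _ => rewrite -leqNgt in H
  end;
  try (apply/leP || apply/ltP);
  repeat match goal with H : context [addn] |- _ => rewrite -plusE in H
                 | H : context [muln] |- _ => rewrite -multE in H
                 | H : context [subn] |- _ => rewrite -minusE in H end;
  rewrite -?plusE -?multE -?minusE; lia.

Arguments ev0 : simpl never.

Section Main.
Variable R : numClosedFieldType.
Local Notation jp := (jpoly R).

Definition Ls (p : nat) : seq jp := nth [::]
  [:: [:: Lam3; Lam5; M8; N12]; [:: Lam5; Lam7; M8; N12]; [:: Lam7; M8; Lam9; N12];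
      [:: M8; Lam9; M10; N12]; [:: Lam9; M10; N12; K12]; [:: Lam9; N12; K12; H14];
      [:: Lam9; K12; H14; F16]] p.
Definition gt (p : nat) : jp := nth (tC 1) [:: tC 1; Lam7; Lam9; M10; K12; H14; F16] p.

Definition c3 : R := - 1. Definition c5 : R := 3%:R. Definition c7 : R := - 15%:R.
Definition c8 : R := 1. Definition c9 : R := 105%:R. Definition c10 : R := - 8%:R.
Definition c12 : R := 1. Definition ck : R := 5%:R. Definition c14 : R := - 5%:R.
Definition c16 : R := 35%:R.
Definition e3 := [:: 1; 1; 0; 0]%N. Definition e5 := [:: 2; 1; 0; 0]%N.
Definition e7 := [:: 3; 1; 0; 0]%N. Definition e8 := [:: 0; 0; 1; 0]%N.
Definition e9 := [:: 4; 1; 0; 0]%N. Definition e10 := [:: 1; 0; 1; 0]%N.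
Definition e12 := [:: 0; 0; 0; 1]%N. Definition ek := [:: 2; 0; 1; 0]%N.
Definition e14 := [:: 1; 0; 0; 1]%N. Definition e16 := [:: 2; 0; 0; 1]%N.
Definition z4 := nseq 4 0%N.

Definition ks (p : nat) : seq R := nth [::]
  [:: [:: c3; c5; c8; c12]; [:: c5; c7; c8; c12]; [:: c7; c8; c9; c12];
      [:: c8; c9; c10; c12]; [:: c9; c10; c12; ck]; [:: c9; c12; ck; c14];
      [:: c9; ck; c14; c16]] p.
Definition as_ (p : nat) : seq (seq nat) := nth [::]
  [:: [:: e3; e5; e8; e12]; [:: e5; e7; e8; e12]; [:: e7; e8; e9; e12];
      [:: e8; e9; e10; e12]; [:: e9; e10; e12; ek]; [:: e9; e12; ek; e14];
      [:: e9; ek; e14; e16]] p.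
Definition kg (p : nat) : R := nth 1 [:: 1; c7; c9; c10; ck; c14; c16] p.
Definition ag (p : nat) : seq nat := nth z4 [:: z4; e7; e9; e10; ek; e14; e16] p.

Definition gens10 : seq jp := [:: Lam3; Lam5; Lam7; M8; Lam9; M10; N12; K12; H14; F16].
Definition ks10 : seq R := [:: c3; c5; c7; c8; c9; c10; c12; ck; c14; c16].
Definition as10 : seq (seq nat) := [:: e3; e5; e7; e8; e9; e10; e12; ek; e14; e16].

Lemma ev0C (x : jvar -> R) c : ev0 x (tC c) = c.
Proof. by []. Qed.

Lemma gtP p x : (p < 7)%N -> ev0 x (gt p) = kg p * mon (U x) (ag p).
Proof.
case: p => [|[|[|[|[|[|[|p]]]]]]] // _; rewrite /gt /kg /ag /=.
- by rewrite ev0C /z4 /= !expr0 !mulr1.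
- exact: G7.
- exact: G9.
- exact: G10.
- exact: G12b.
- exact: G14.
- exact: G16.
Qed.

Lemma argsP p x i : (p < 7)%N ->
  ev0 x (nth (tC 0) (Ls p) i) = nth 0 (ks p) i * mon (U x) (nth [::] (as_ p) i).
Proof.
case: p => [|[|[|[|[|[|[|p]]]]]]] // _; rewrite /Ls /ks /as_ /=;
(case: i => [|[|[|[|i]]]] /=; [ | | | | by rewrite !nth_nil ev0C mul0r]);
rewrite ?G3 ?G5 ?G7 ?G8 ?G9 ?G10 ?G12 ?G12b ?G14 ?G16 //.
Qed.

Lemma args10P x i :
  ev0 x (nth (tC 0) gens10 i) = nth 0 ks10 i * mon (U x) (nth [::] as10 i).
Proof.
rewrite /gens10 /ks10 /as10.
do 10?[case: i => [|i] /=; first by rewrite ?G3 ?G5 ?G7 ?G8 ?G9 ?G10 ?G12 ?G12b ?G14 ?G16].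
by rewrite !nth_nil ev0C mul0r.
Qed.

Lemma rnL d (L : seq jp) x (H : size L = d) i :
  rn (fun j : 'I_d => ev0 x (nth (tC 0) L j)) i = ev0 x (nth (tC 0) L i).
Proof.
rewrite /rn; case: insubP => [j _ <- //|].
by rewrite -leqNgt -H => Hi; rewrite nth_default.
Qed.

Lemma size_Ls p : (p < 7)%N -> size (Ls p) = 4.
Proof. by case: p => [|[|[|[|[|[|[|p]]]]]]]. Qed.

Lemma partP p (Q : term R 'I_4) x : (p < 7)%N ->
  ev0 x (gt p) * comp0 Q (Ls p) x = reval (U x) (map (tr (kg p) (ag p) (ks p) (as_ p)) (trep Q)).
Proof.
move=> Hp; rewrite gtP // /comp0 trepP; apply: reval_tr => i.
by rewrite (@rnL _ _ x (size_Ls _ Hp)) argsP.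
Qed.

Lemma comp10P (P : term R 'I_10) x :
  comp0 P gens10 x = reval (U x) (map (tr 1 z4 ks10 as10) (trep P)).
Proof.
have H : forall i, rn (fun j : 'I_10 => ev0 x (nth (tC 0) gens10 j)) i = nth 0 ks10 i * mon (U x) (nth [::] as10 i).
  by move=> i; rewrite (@rnL _ _ x (erefl : size gens10 = 10)) args10P.
by rewrite /comp0 trepP -(@reval_tr _ _ _ 1 z4 _ _ _ H) /z4 mon_nseq0 !mul1r.
Qed.

End Main.

Definition good (f : seq nat) : bool :=
  (nth 0 f 1 <= nth 0 f 0 <= 4 * nth 0 f 1 + 2 * nth 0 f 2 + 2 * nth 0 f 3)%N.

Lemma nth_escale k a i : nth 0%N (escale k a) i = (k * nth 0%N a i)%N.
Proof. by elim: a i => [|x a IH] [|i] //=; rewrite ?nth_nil ?muln0. Qed.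

Lemma good_eadd a b : good a -> good b -> good (eadd a b).
Proof.
rewrite /good !nth_eadd => /andP [H1 H2] /andP [H3 H4].
by apply/andP; split; nlia.
Qed.

Lemma good_escale k a : good a -> good (escale k a).
Proof.
rewrite /good !nth_escale => /andP [H1 H2].
apply/andP; split; first by rewrite leq_mul2l H1 orbT.
by rewrite mulnCA (mulnCA 2 k) (mulnCA 2 k) -!mulnDr leq_mul2l H2 orbT.
Qed.

Lemma good_elin as0 e : all good as0 -> good (elin as0 e).
Proof.
elim: e as0 => [|k e IH] as0 Ha /=; first by [].
apply: good_eadd; last by apply: IH; case: as0 Ha => //= ? ? /andP [].
by apply: good_escale; case: as0 Ha => //= ? ? /andP [].
Qed.

Lemma size_elin as0 e : all (fun a => size a <= 4)%N as0 -> size (elin as0 e) = 4.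
Proof.
elim: e as0 => [|k e IH] as0 Ha /=; first by [].
rewrite size_eadd IH; last by case: as0 Ha => //= ? ? /andP [].
case: as0 Ha => [|a as0] //= /andP [Ha _].
by rewrite size_map; apply/maxn_idPr.
Qed.

Definition phi (p a b c d : nat) : seq nat :=
  match p with
  | 0 => [:: a + 2 * b; a + b; c; d]
  | 1 => [:: 3 + 2 * a + 3 * b; 1 + a + b; c; d]
  | 2 => [:: 4 + 3 * a + 4 * c; 1 + a + c; b; d]
  | 3 => [:: 1 + 4 * b + c; b; 1 + a + c; d]
  | 4 => [:: 2 + 4 * a + b + 2 * d; a; 1 + b + d; c]
  | 5 => [:: 1 + 4 * a + 2 * c + d; a; c; 1 + b + d]
  | _ => [:: 2 + 4 * a + 2 * b + c + 2 * d; a; b; 1 + c + d]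
  end%N.

Lemma phiE p a b c d : (p < 7)%N ->
  eadd (ag p) (elin (as_ p) [:: a; b; c; d]) = phi p a b c d.
Proof.
case: p => [|[|[|[|[|[|[|p]]]]]]] // _; rewrite /= /escale /=; congr [:: _; _; _; _]; nlia.
Qed.

Lemma phi_inj p q a b c d a' b' c' d' : (p < 7)%N -> (q < 7)%N ->
  phi p a b c d = phi q a' b' c' d' -> p = q /\ [:: a; b; c; d] = [:: a'; b'; c'; d'].
Proof.
case: p => [|[|[|[|[|[|[|p]]]]]]] // _; case: q => [|[|[|[|[|[|[|q]]]]]]] // _ /=;
  case=> H1 H2 H3 H4; (split; [nlia | congr [:: _; _; _; _]; nlia]).
Qed.

Section Main2.
Variable R : numClosedFieldType.
Local Notation jp := (jpoly R).

Definition tpow (t : term R 'I_4) n := iter n (tMul t) (tC 1).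
Definition tmono (e : seq nat) : term R 'I_4 :=
  tMul (tpow (tV (inord 0)) (nth 0%N e 0))
   (tMul (tpow (tV (inord 1)) (nth 0%N e 1))
    (tMul (tpow (tV (inord 2)) (nth 0%N e 2)) (tpow (tV (inord 3)) (nth 0%N e 3)))).

Lemma tpowP rho t n : teval rho (tpow t n) = teval rho t ^+ n.
Proof. by elim: n => [|n IH] //=; rewrite IH exprS. Qed.

Lemma rn_inord d (rho : 'I_d.+1 -> R) k : (k < d.+1)%N -> rn rho k = rho (inord k).
Proof. by move=> Hk; rewrite -{1}(inordK Hk) rnE. Qed.

Lemma tmonoP rho e : size e = 4 -> teval rho (tmono e) = mon (rn rho) e.
Proof.
case: e => [|a [|b [|c [|d [|? ?]]]]] // _.
by rewrite /= !tpowP /= !(@rn_inord 3) // mulr1.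
Qed.

Lemma mon_neq0 (rho : nat -> R) e : (forall i, (i < size e)%N -> rho i != 0) -> mon rho e != 0.
Proof.
elim: e rho => [|k e IH] rho H /=; first exact: oner_neq0.
rewrite mulf_neq0 ?expf_neq0 ?(H 0%N) //.
by apply: IH => i Hi; apply: H.
Qed.

Lemma ks_neq0 p i : (p < 7)%N -> (i < 4)%N -> nth 0 (ks R p) i != 0.
Proof.
rewrite /c3.
case: p => [|[|[|[|[|[|[|p]]]]]]] // _; case: i => [|[|[|[|i]]]] // _;
  rewrite /= /c3 /c5 /c7 /c8 /c9 /c10 /c12 /ck /c14 /c16 ?oppr_eq0 ?oner_eq0 ?pnatr_eq0 //.
Qed.

Lemma kg_neq0 p : (p < 7)%N -> kg R p != 0.
Proof.
case: p => [|[|[|[|[|[|[|p]]]]]]] // _;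
  rewrite /= /c7 /c9 /c10 /ck /c14 /c16 ?oppr_eq0 ?oner_eq0 ?pnatr_eq0 //.
Qed.

Lemma monks_neq0 p e : (p < 7)%N -> size e = 4 -> mon (fun i => nth 0 (ks R p) i) e != 0.
Proof. by move=> Hp He; apply: mon_neq0 => i; rewrite He; apply: ks_neq0. Qed.

Definition mQ p (e : seq nat) (c : R) : term R 'I_4 :=
  tMul (tC (c / (kg R p * mon (fun i => nth 0 (ks R p) i) e))) (tmono e).

Lemma mono_part p e c x : (p < 7)%N -> size e = 4 ->
  ev0 x (gt R p) * comp0 (mQ p e c) (Ls R p) x = c * mon (U x) (eadd (ag p) (elin (as_ p) e)).
Proof.
move=> Hp He.
have H : forall i, rn (fun j : 'I_4 => ev0 x (nth (tC 0) (Ls R p) j)) i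
   = nth 0 (ks R p) i * mon (U x) (nth [::] (as_ p) i).
  by move=> i; rewrite (@rnL R _ _ x (@size_Ls R p Hp)) argsP.
have HQ : forall rho, teval rho (mQ p e c) =
    (c / (kg R p * mon (fun i => nth 0 (ks R p) i) e)) * mon (rn rho) e.
  by move=> rho; rewrite -tmonoP.
rewrite gtP // /comp0 HQ (@mon_elin _ _ _ _ _ e H) mon_eadd rearr.
by rewrite divfK // mulf_neq0 ?kg_neq0 ?monks_neq0.
Qed.

Lemma mono_exists c f : good f -> size f = 4 ->
  exists p, (p < 7)%N /\ exists Q : term R 'I_4,
    forall x, ev0 x (gt R p) * comp0 Q (Ls R p) x = c * mon (U x) f.
Proof.
case: f => [|i [|j [|k [|l [|? ?]]]]] // /andP [H1 H2] _.
move: H1 H2 => /= H1 H2.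
have mk : forall p a b c' d, (p < 7)%N -> phi p a b c' d = [:: i; j; k; l] ->
  exists p0, (p0 < 7)%N /\ exists Q : term R 'I_4,
    forall x, ev0 x (gt R p0) * comp0 Q (Ls R p0) x = c * mon (U x) [:: i; j; k; l].
  move=> p a b c' d Hp Hphi; exists p; split => //; exists (mQ p [:: a; b; c'; d] c) => x.
  by rewrite mono_part // phiE // Hphi.
case: (leqP i (2 * j)%N) => Ha.
  by apply: (mk 0%N (2 * j - i)%N (i - j)%N (k)%N (l)%N) => //=; congr [:: _; _; _; _]; nlia.
case: (leqP i (3 * j)%N) => Hb.
  by apply: (mk 1%N (3 * j - i)%N (i - 2 * j - 1)%N (k)%N (l)%N) => //=; congr [:: _; _; _; _]; nlia.
case: (leqP i (4 * j)%N) => Hc.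
  by apply: (mk 2%N (4 * j - i)%N (k)%N (i - 3 * j - 1)%N (l)%N) => //=; congr [:: _; _; _; _]; nlia.
case: (leqP i (4 * j + k)%N) => Hd.
  by apply: (mk 3%N (k + 4 * j - i)%N (j)%N (i - 4 * j - 1)%N (l)%N) => //=; congr [:: _; _; _; _]; nlia.
case: (leqP i (4 * j + 2 * k)%N) => He.
  by apply: (mk 4%N (j)%N (2 * k + 4 * j - i)%N (l)%N (i - 4 * j - k - 1)%N) => //=; congr [:: _; _; _; _]; nlia.
case: (leqP i (4 * j + 2 * k + l)%N) => Hf.
  by apply: (mk 5%N (j)%N (l + 4 * j + 2 * k - i)%N (k)%N (i - 4 * j - 2 * k - 1)%N) => //=; congr [:: _; _; _; _]; nlia.
by apply: (mk 6%N (j)%N (k)%N (2 * l + 4 * j + 2 * k - i)%N (i - 4 * j - 2 * k - l - 1)%N) => //=; congr [:: _; _; _; _]; nlia.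
Qed.

End Main2.

Section Main3.
Variable R : numClosedFieldType.

Definition RHSf (Qs : nat -> term R 'I_4) (x : jvar -> R) : R :=
  \sum_(p < 7) ev0 x (gt R p) * comp0 (Qs p) (Ls R p) x.

Lemma exist_list (L : rep R) : all (fun s => good s.2 && (size s.2 == 4)) L ->
  exists Qs, forall x, RHSf Qs x = reval (U x) L.
Proof.
elim: L => [|[c f] L IH] /=.
  move=> _; exists (fun _ => tC 0) => x; rewrite /RHSf /reval big_nil big1 // => p _.
  by rewrite /comp0 /= mulr0.
case/andP => /andP [Hg /eqP Hs] HL.
have [Qs HQs] := IH HL.
have [p [Hp [Q HQ]]] := @mono_exists R c f Hg Hs.
exists (fun p' => tAdd (if p' == p then Q else tC 0) (Qs p')) => x.
rewrite /RHSf.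
have -> : \sum_(p' < 7) ev0 x (gt R p') * comp0 (tAdd (if (p' : nat) == p then Q else tC 0) (Qs p')) (Ls R p') x
  = \sum_(p' < 7) ev0 x (gt R p') * comp0 (if (p' : nat) == p then Q else tC 0) (Ls R p') x
    + \sum_(p' < 7) ev0 x (gt R p') * comp0 (Qs p') (Ls R p') x.
  by rewrite -big_split; apply: eq_bigr => p' _ /=; rewrite -mulrDr.
have E := HQs x; rewrite /RHSf in E; rewrite E /reval big_cons /=; congr (_ + _).
rewrite (bigD1 (Ordinal Hp)) //= eqxx HQ big1 ?addr0 // => p' Hp'.
have : (p' : nat) != p by move: Hp'; apply: contra => /eqP H; apply/eqP/val_inj.
by move/negbTE => ->; rewrite /comp0 /= mulr0.
Qed.

Lemma RHSfE (Qs : nat -> term R 'I_4) x : RHSf Qs x =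
   comp0 (Qs 0%N) [:: Lam3; Lam5; M8; N12] x
   + ev0 x Lam7 * comp0 (Qs 1%N) [:: Lam5; Lam7; M8; N12] x
   + ev0 x Lam9 * comp0 (Qs 2%N) [:: Lam7; M8; Lam9; N12] x
   + ev0 x M10 * comp0 (Qs 3%N) [:: M8; Lam9; M10; N12] x
   + ev0 x K12 * comp0 (Qs 4%N) [:: Lam9; M10; N12; K12] x
   + ev0 x H14 * comp0 (Qs 5%N) [:: Lam9; N12; K12; H14] x
   + ev0 x F16 * comp0 (Qs 6%N) [:: Lam9; K12; H14; F16] x.
Proof. by rewrite /RHSf !big_ord_recr big_ord0 /= add0r ev0C mul1r. Qed.

Lemma reval_flatten (rho : nat -> R) (F : nat -> rep R) s :
  reval rho (flatten (map F s)) = \sum_(p <- s) reval rho (F p).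
Proof. by elim: s => [|q s IH] /=; rewrite ?big_nil ?big_cons ?reval_cat ?IH // /reval big_nil. Qed.

Lemma sum_flatten (F : nat -> rep R) s (P : pred (R * seq nat)) :
  \sum_(t <- flatten (map F s) | P t) t.1 = \sum_(q <- s) \sum_(t <- F q | P t) t.1.
Proof. by elim: s => [|q s IH] /=; rewrite ?big_nil ?big_cons ?big_cat ?IH. Qed.

Lemma reval_ext (rho rho' : nat -> R) (L : rep R) d :
  all (fun s => size s.2 == d) L -> (forall i, (i < d)%N -> rho i = rho' i) ->
  reval rho L = reval rho' L.
Proof.
move=> Hs H; rewrite /reval big_seq [RHS]big_seq; apply: eq_bigr => t /(allP Hs) /eqP Ht.
by rewrite (@mon_ext _ rho rho') // Ht.
Qed.

Lemma realize (r : nat -> R) : r 0%N != 0 -> r 1%N != 0 ->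
  exists x, forall i, (i < 4)%N -> U x i = r i.
Proof.
move=> H0 H1.
pose D1 : R := 3%:R * r 0%N * r 1%N ^+ 2.
pose D2 : R := - 9%:R * r 0%N ^+ 2 * r 1%N ^+ 3.
pose x := fun v : jvar => let (a, k) := v in
  if (val a == 0)%N then
    (if (k == 2)%N then r 0%N else if (k == 4)%N then r 2%N / D1
     else if (k == 5)%N then r 3%N / D2 else 0)
  else (if (k == 1)%N then r 1%N else 0).
exists x => -[|[|[|[|i]]]] // _.
- rewrite /U /=. rewrite M8spec // mulrC divfK //.
  by rewrite /D1 !mulf_neq0 ?expf_neq0 ?pnatr_eq0.
- rewrite /U /=. rewrite N12spec // mulrC divfK //.
  by rewrite /D2 !mulf_neq0 ?expf_neq0 ?oppr_eq0 ?pnatr_eq0.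
Qed.

Lemma size_phiS p e : (p < 7)%N -> size (eadd (ag p) (elin (as_ p) e)) = 4.
Proof.
move=> Hp; rewrite size_eadd size_elin; last by case: p Hp => [|[|[|[|[|[|[|p]]]]]]].
by case: p Hp => [|[|[|[|[|[|[|p]]]]]]].
Qed.

Lemma phiS_inj p q e e' : (p < 7)%N -> (q < 7)%N -> size e = 4 -> size e' = 4 ->
  eadd (ag q) (elin (as_ q) e') = eadd (ag p) (elin (as_ p) e) -> q = p /\ e' = e.
Proof.
move=> Hp Hq.
case: e => [|a [|b [|c [|d [|? ?]]]]] // _.
case: e' => [|a' [|b' [|c' [|d' [|? ?]]]]] // _.
by rewrite !phiE // => /phi_inj; apply.
Qed.

Lemma uniq_core (Qs : nat -> term R 'I_4) : (forall x, RHSf Qs x = 0) ->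
  forall p, (p < 7)%N -> forall rho, teval rho (Qs p) = 0.
Proof.
move=> H p Hp rho.
set Ftot := flatten [seq map (tr (kg R q) (ag q) (ks R q) (as_ q)) (trep (Qs q)) | q <- index_iota 0 7].
have Hsz : all (fun s => size s.2 == 4) Ftot.
  apply/allP => t /flatten_mapP [q]; rewrite mem_index_iota => /andP [_ Hq] /mapP [s _ ->] /=.
  by rewrite size_phiS.
have HRF : forall x, RHSf Qs x = reval (U x) Ftot.
  move=> x; rewrite reval_flatten big_mkord; apply: eq_bigr => q _.
  exact: partP.
have HF : forall r, (forall i, (i < 4)%N -> r i != 0) -> reval r Ftot = 0.
  move=> r Hr; have [x Hx] := @realize r (Hr 0%N isT) (Hr 1%N isT).
  by rewrite (@reval_ext r (U x) Ftot 4 Hsz) -?HRF ?H // => i Hi; rewrite Hx.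
have HE := @extract R 4 Ftot Hsz HF.
have Hc : forall e, \sum_(t <- trep (Qs p) | t.2 == e) t.1 = 0.
  move=> e; case: (boolP (size e == 4)) => He; last first.
    rewrite big_seq_cond big1 // => t /andP [/(allP (@trep_size R 4 (Qs p))) /eqP Ht /eqP E].
    by move: He; rewrite -E Ht eqxx.
  have := HE (eadd (ag p) (elin (as_ p) e)).
  rewrite sum_flatten (bigD1_seq p) ?mem_index_iota ?iota_uniq //=.
  rewrite [X in _ + X]big1_seq ?addr0; last first.
    move=> q /andP [Hqp Hq]; move: Hq; rewrite mem_index_iota => /andP [_ Hq].
    rewrite big_map big1_seq // => s /andP [/eqP Heq Hs] /=.
    have [Hqp' _] := @phiS_inj p q e s.2 Hp Hq (eqP He) (eqP (allP (@trep_size R 4 (Qs q)) _ Hs)) Heq.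
    by move: Hqp; rewrite Hqp' eqxx.
  rewrite big_map /=.
  have -> : \sum_(i <- trep (Qs p) | eadd (ag p) (elin (as_ p) i.2) == eadd (ag p) (elin (as_ p) e))
        (kg R p * i.1 * mon (fun i0 : nat => (ks R p)`_i0) i.2)
      = kg R p * mon (fun i0 : nat => (ks R p)`_i0) e * \sum_(i <- trep (Qs p) | i.2 == e) i.1.
    rewrite mulr_sumr big_seq_cond [RHS]big_seq_cond; apply: eq_big => [s|s /andP [Hs Hse]].
      case: (boolP (s \in trep (Qs p))) => //= Hs.
      apply/eqP/eqP => [Heq|->] //.
      by have [_ ->] := @phiS_inj p p e s.2 Hp Hp (eqP He) (eqP (allP (@trep_size R 4 (Qs p)) _ Hs)) Heq.
    have [_ E] := @phiS_inj p p e s.2 Hp Hp (eqP He) (eqP (allP (@trep_size R 4 (Qs p)) _ Hs)) (eqP Hse).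
    by rewrite /= E mulrAC.
  move/eqP; rewrite mulf_eq0 => /orP [|/eqP //].
  by rewrite mulf_eq0 (negbTE (@kg_neq0 R p Hp)) (negbTE (@monks_neq0 R p e Hp (eqP He))).
by rewrite trepP (@group_zero R _ Hc).
Qed.

End Main3.

Theorem mainTheorem12 (R : numClosedFieldType) :
  (forall P : term R 'I_10,
     exists P0 Q0 R0 S0 T0 U0 V0 : term R 'I_4,
     forall x : jvar -> R,
       comp0 P [:: Lam3; Lam5; Lam7; M8; Lam9; M10; N12; K12; H14; F16] x
       = comp0 P0 [:: Lam3; Lam5; M8; N12] x
         + ev0 x Lam7 * comp0 Q0 [:: Lam5; Lam7; M8; N12] x
         + ev0 x Lam9 * comp0 R0 [:: Lam7; M8; Lam9; N12] x
         + ev0 x M10 * comp0 S0 [:: M8; Lam9; M10; N12] x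
         + ev0 x K12 * comp0 T0 [:: Lam9; M10; N12; K12] x
         + ev0 x H14 * comp0 U0 [:: Lam9; N12; K12; H14] x
         + ev0 x F16 * comp0 V0 [:: Lam9; K12; H14; F16] x)
  /\
  (forall P0 Q0 R0 S0 T0 U0 V0 : term R 'I_4,
     (forall x : jvar -> R,
         comp0 P0 [:: Lam3; Lam5; M8; N12] x
         + ev0 x Lam7 * comp0 Q0 [:: Lam5; Lam7; M8; N12] x
         + ev0 x Lam9 * comp0 R0 [:: Lam7; M8; Lam9; N12] x
         + ev0 x M10 * comp0 S0 [:: M8; Lam9; M10; N12] x
         + ev0 x K12 * comp0 T0 [:: Lam9; M10; N12; K12] x
         + ev0 x H14 * comp0 U0 [:: Lam9; N12; K12; H14] x
         + ev0 x F16 * comp0 V0 [:: Lam9; K12; H14; F16] x = 0) ->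
     forall rho : 'I_4 -> R,
       teval rho P0 = 0 /\ teval rho Q0 = 0 /\ teval rho R0 = 0 /\
       teval rho S0 = 0 /\ teval rho T0 = 0 /\ teval rho U0 = 0 /\
       teval rho V0 = 0).
Proof.
split.
  move=> P.
  set L := map (tr 1 z4 (ks10 R) as10) (trep P).
  have HL : all (fun s => good s.2 && (size s.2 == 4)) L.
    rewrite all_map; apply/allP => s _.
    change (good (eadd z4 (elin as10 s.2)) && (size (eadd z4 (elin as10 s.2)) == 4)).
    apply/andP; split; first by apply: good_eadd => //; apply: good_elin.
    by rewrite size_eadd size_elin.
  have [Qs HQs] := @exist_list R L HL.
  exists (Qs 0%N), (Qs 1%N), (Qs 2%N), (Qs 3%N), (Qs 4%N), (Qs 5%N), (Qs 6%N) => x.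
  by rewrite -RHSfE HQs comp10P.
move=> P0 Q0 R0 S0 T0 U0 V0 H rho.
pose Qs := fun p => nth (tC 0) [:: P0; Q0; R0; S0; T0; U0; V0] p.
have HR : forall x, RHSf R Qs x = 0 by move=> x; rewrite RHSfE; exact: H.
have Hu := @uniq_core R Qs HR.
split; first exact: (Hu 0%N isT rho).
split; first exact: (Hu 1%N isT rho).
split; first exact: (Hu 2%N isT rho).
split; first exact: (Hu 3%N isT rho).
split; first exact: (Hu 4%N isT rho).
split; first exact: (Hu 5%N isT rho).
exact: (Hu 6%N isT rho).
Qed.
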